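(* For every constant $c\ge 1$ there exist graphs $G$ (with arbitrarily large number of vertices $n$) such that the following spanning-tree sampling procedure requires $\rho=\Omega(\log n)$ rounds in order to approximate all cuts of $G$ within a factor $c$ with constant probability: compute the effective conductance $c_e$ of every edge; start with $E'=\emptyset$, $w\equiv 0$; for each of $\rho$ rounds, independently pick a uniformly random spanning tree $T$ of $G$, and for each edge $e\in T$ add $e$ to $E'$ and increase $w_e$ by $c_e/\rho$. That is, if $\rho=o(\log n)$ then with probability bounded below by a positive constant there is a set $S\subseteq V$ with $w(\delta(S))$ and $|\delta(S)|$ differing by more than a factor $c$.
   Context: Graphs here may have parallel edges (unit weight per copy). $\delta(S)$ is the set of edges with exactly one endpoint in $S$. The effective conductance $c_e$ of an edge $e=st$ is the current flowing from $s$ to $t$ when every edge is a unit resistor and a unit voltage difference is imposed between $s$ and $t$. *)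

(* Defs.v *)
From HB Require Import structures.
From mathcomp Require Import all_boot all_order all_algebra.
From mathcomp Require Import reals exp.
Set Implicit Arguments. Unset Strict Implicit. Unset Printing Implicit Defensive.
Import Order.TTheory GRing.Theory Num.Theory.
Local Open Scope ring_scope.

(* A multigraph: vertex type V, edge type E (parallel edges = distinct
   elements of E with the same endpoints), [ends e = (x, y)]. *)
Section MultiGraph.
Variables (V E : finType) (ends : E -> V * V).

Definition loopless : Prop := forall e, (ends e).1 != (ends e).2.

Definition adj (F : {set E}) : rel V := fun x y =>
  [exists e in F, (ends e == (x, y)) || (ends e == (y, x))].

Definition connected_on (F : {set E}) : bool :=
  [forall x, [forall y, connect (adj F) x y]].

(* spanning tree: connected spanning edge set which is acyclic, i.e. every
   edge is a bridge (removing it disconnects its endpoints). *)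
Definition spanning_tree (T : {set E}) : bool :=
  connected_on T &&
  [forall e in T, ~~ connect (adj (T :\ e)) (ends e).1 (ends e).2].

Definition cut (S : {set V}) : {set E} :=
  [set e | ((ends e).1 \in S) != ((ends e).2 \in S)].

Variable R : realType.

(* net current leaving v for potential phi, every edge a unit resistor *)
Definition net_current (phi : V -> R) (v : V) : R :=
  \sum_(e | (ends e).1 == v) (phi v - phi (ends e).2) +
  \sum_(e | (ends e).2 == v) (phi v - phi (ends e).1).

Definition unit_potential (phi : V -> R) (s t : V) : Prop :=
  phi s = 1 /\ phi t = 0 /\
  forall v, v != s -> v != t -> net_current phi v = 0.

Definition sampled_weight (c : E -> R) (rho : nat)
  (Ts : {ffun 'I_rho -> {set E}}) (e : E) : R :=
  c e / rho%:R * #|[set i | e \in Ts i]|%:R.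

Definition bad_sample (c : E -> R) (cf : R) (rho : nat)
  (Ts : {ffun 'I_rho -> {set E}}) : bool :=
  [exists S : {set V},
     let W := \sum_(e in cut S) sampled_weight c Ts e in
     let k := #|cut S|%:R in
     (cf * k < W) || (W * cf < k)].

(* probability (rho independent uniform spanning trees) of a bad sample *)
Definition failure_prob (c : E -> R) (cf : R) (rho : nat) : R :=
  #|[set Ts : {ffun 'I_rho -> {set E}} |
       [forall i, spanning_tree (Ts i)] && bad_sample c cf Ts]|%:R /
  (#|[set T | spanning_tree T]| ^ rho)%:R.

End MultiGraph.

(* Main.v *)
Require Import Defs.
From HB Require Import structures.
From mathcomp Require Import all_boot all_order all_algebra.
From mathcomp Require Import reals exp.
From mathcomp Require Import zify ring lra.
Set Implicit Arguments. Unset Strict Implicit. Unset Printing Implicit Defensive.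
Import Order.TTheory GRing.Theory Num.Theory.

Ltac sh := match goal with |- ?g => idtac g end.
Section Flower.
Variables (M B : nat).
Definition Xt : finType := (bool + 'I_B)%type.
Definition Vt : finType := option ('I_M * bool).
Definition Et : finType := ('I_M * Xt)%type.
Definition gends (e : Et) : Vt * Vt :=
  match e.2 with
  | inl s => (None, Some (e.1, s))
  | inr _ => (Some (e.1, false), Some (e.1, true))
  end.

Definition vlT (T : {set Et}) (i : 'I_M) : bool :=
  (((i, inl false) \in T) + ((i, inl true) \in T) + #|[set k | (i, inr k) \in T]| == 2)%N
  && (((i, inl false) \in T) || ((i, inl true) \in T)).

Lemma adj_sym (F : {set Et}) : symmetric (adj gends F).
Proof. by move=> x y; rewrite /adj; apply: eq_existsb => e; rewrite orbC. Qed.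

Lemma adjI (F : {set Et}) e u v : e \in F -> gends e = (u, v) -> adj gends F u v.
Proof. by move=> eF He; apply/existsP; exists e; rewrite eF He eqxx. Qed.

Lemma adjI' (F : {set Et}) e u v : e \in F -> gends e = (v, u) -> adj gends F u v.
Proof. by move=> eF He; apply/existsP; exists e; rewrite eF He eqxx orbT. Qed.

Lemma noncon (F : {set Et}) (A : {set Vt}) x y :
  (forall e, e \in F -> ((gends e).1 \in A) = ((gends e).2 \in A)) ->
  (x \in A) != (y \in A) -> ~~ connect (adj gends F) x y.
Proof.
move=> H xyA; apply/negP => C.
have cl : closed (adj gends F) [pred v | v \in A].
  move=> u v /existsP [e /andP [eF /orP [] /eqP He]]; have := H e eF;
  by rewrite He /=.
have := closed_connect cl C; rewrite !inE => E.
by rewrite E eqxx in xyA.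
Qed.

Lemma SomeE (a b : 'I_M * bool) : (Some a == Some b :> Vt) = (a == b).
Proof. by []. Qed.
Lemma NoneSomeE (b : 'I_M * bool) : (None == Some b :> Vt) = false.
Proof. by []. Qed.
Lemma SomeNoneE (b : 'I_M * bool) : (Some b == None :> Vt) = false.
Proof. by []. Qed.

Lemma vl_inr T i k : vlT T i -> (i, inr k) \in T ->
  ((i, inl false) \in T) != ((i, inl true) \in T) /\
  forall k', (i, inr k') \in T -> k' = k.
Proof.
rewrite /vlT => /andP [/eqP S O] Hk.
have kD : k \in [set k | (i, inr k) \in T] by rewrite inE.
have d1 : #|[set k | (i, inr k) \in T]| = 1%N.
  have : (0 < #|[set k | (i, inr k) \in T]|)%N by apply/card_gt0P; exists k.
  move: S O; set d := #|_|.
  by case: ((i, inl false) \in T); case: ((i, inl true) \in T) => /=; lia.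
split.
  move: S O; rewrite d1.
  by case: ((i, inl false) \in T); case: ((i, inl true) \in T).
move=> k' Hk'; have k'D : k' \in [set k | (i, inr k) \in T] by rewrite inE.
have /eqP/cards1P [k0 D0] := d1.
by move: kD k'D; rewrite D0 !inE => /eqP -> /eqP ->.
Qed.

Lemma sufficient T : (forall i, vlT T i) -> spanning_tree gends T.
Proof.
move=> H.
have hub : forall v, connect (adj gends T) None v.
  case=> [[i s]|]; last exact: connect0.
  have := H i; rewrite /vlT.
  case Ha: ((i, inl false) \in T); case Hb: ((i, inl true) \in T) => //=.
  - by case: s => /=; rewrite ?add0n => _; apply: connect1;
      [apply: (adjI (e := (i, inl true))) | apply: (adjI (e := (i, inl false)))].
  - move=> /andP [/eqP D _]; move: D; rewrite /nat_of_bool => D.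
    have [k] : exists k, (i, inr k) \in T.
      have : (0 < #|[set k | (i, inr k) \in T]|)%N by (move: D; set d := #|_|; lia).
      by case/card_gt0P => k; rewrite inE => ?; exists k.
    move=> Hk; case: s.
      apply: (@connect_trans _ _ (Some (i, false))).
        by apply: connect1; apply: (adjI (e := (i, inl false))).
      by apply: connect1; apply: (adjI (e := (i, inr k))).
    by apply: connect1; apply: (adjI (e := (i, inl false))).
  - move=> /andP [/eqP D _]; move: D; rewrite /nat_of_bool => D.
    have [k] : exists k, (i, inr k) \in T.
      have : (0 < #|[set k | (i, inr k) \in T]|)%N by (move: D; set d := #|_|; lia).
      by case/card_gt0P => k; rewrite inE => ?; exists k.
    move=> Hk; case: s.
      by apply: connect1; apply: (adjI (e := (i, inl true))).
    apply: (@connect_trans _ _ (Some (i, true))).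
      by apply: connect1; apply: (adjI (e := (i, inl true))).
    by apply: connect1; apply: (adjI' (e := (i, inr k))).
  - by rewrite andbF.
rewrite /spanning_tree; apply/andP; split.
  apply/forallP => x; apply/forallP => y.
  apply: (@connect_trans _ _ None); last exact: hub.
  by rewrite (sym_connect_sym (@adj_sym T)); exact: hub.
apply/forallP => -[i [s|k]]; apply/implyP => eT /=.
  apply: (noncon (A := if (i, inl (~~ s)) \in T then [set Some (i, s)]
                     else [set Some (i, false); Some (i, true)])).
    move=> -[j [s'|k']] /setD1P [ne e'T] /=; case: ifP => Hn;
    rewrite !inE /= ?SomeE ?NoneSomeE ?xpair_eqE;
    (case: (eqVneq j i) => [?|jne]; [subst j | by rewrite ?(negbTE jne)]); rewrite ?andTb.
    - by move: eT; case: s s' ne Hn e'T => [] [] /= ne' Hn' e'T' ?; rewrite ?eqxx in ne'; rewrite ?Hn' in e'T'.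
    - by move: eT; case: s s' ne Hn e'T => [] [] /= ne' Hn' e'T' ?; rewrite ?eqxx in ne'; rewrite ?Hn' in e'T'.
    - by have [] := vl_inr (H i) e'T; move: eT Hn; case: s {ne} => /= -> ->.
    - by [].
  by case: ifP => _; rewrite !inE ?NoneSomeE ?SomeE ?xpair_eqE ?eqxx //=; case: s {eT}.
have [ab uk] := vl_inr (H i) eT.
apply: (noncon (A := if (i, inl false) \in T then [set Some (i, true)]
                     else [set Some (i, false)])).
  move=> -[j [s'|k']] /setD1P [ne e'T] /=; case: ifP => Hn;
  rewrite !inE /= ?SomeE ?NoneSomeE ?xpair_eqE;
  (case: (eqVneq j i) => [?|jne]; [subst j | by rewrite ?(negbTE jne)]); rewrite ?andTb.
  - by case: s' ne e'T => // _ e'T; move: ab; rewrite Hn e'T.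
  - by case: s' ne e'T => // _ e'T; rewrite Hn in e'T.
  - by rewrite (uk _ e'T) eqxx in ne.
  - by rewrite (uk _ e'T) eqxx in ne.
by case: ifP => _; rewrite !inE ?SomeE ?xpair_eqE ?eqxx.
Qed.
Lemma necessary T : spanning_tree gends T -> forall i, vlT T i.
Proof.
case/andP => /forallP Hc /forallP Hb i.
have conn x y : connect (adj gends T) x y by have /forallP := Hc x; apply.
have br e : e \in T -> ~~ connect (adj gends (T :\ e)) (gends e).1 (gends e).2.
  by move=> eT; have := Hb e; rewrite eT.
have F1 : ((i, inl false) \in T) || ((i, inl true) \in T).
  apply/negPn/negP => /norP [na nb].
  have := conn None (Some (i,false)); apply/negP.
  apply: (noncon (A := [set Some (i,false); Some (i,true)])).
    move=> -[j [s|k]] eT /=; rewrite !inE /= ?SomeE ?NoneSomeE ?xpair_eqE;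
    (case: (eqVneq j i) => [?|jne]; [subst j | by rewrite ?(negbTE jne)]); rewrite ?andTb //.
    by case: s eT => eT; [rewrite eT in nb | rewrite eT in na].
  by rewrite !inE !NoneSomeE SomeE eqxx.
have F2 : forall k k', (i, inr k) \in T -> (i, inr k') \in T -> k' = k.
  move=> k k' Hk Hk'; apply/eqP/negPn/negP => ne.
  have := br _ Hk => /=; apply/negP/negPn.
  apply: connect1; apply: (adjI (e := (i, inr k'))) => //.
  rewrite !inE Hk' andbT; apply: contra ne => /eqP [->] //.
have F3 : (i, inl false) \in T -> (i, inl true) \in T -> forall k, (i, inr k) \notin T.
  move=> Ha Hb' k; apply/negP => Hk; have := br _ Hk; apply/negP/negPn => /=.
  apply: (@connect_trans _ _ None).
    by apply: connect1; apply: (adjI' (e := (i, inl false))); last by []; by rewrite !inE Ha andbT xpair_eqE eqxx.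
  by apply: connect1; apply: (adjI (e := (i, inl true))); rewrite // !inE Hb' andbT xpair_eqE eqxx.
have F4a : (i, inl false) \in T -> (i, inl true) \notin T -> exists k, (i, inr k) \in T.
  move=> Ha Hnb; case: (pickP (fun k => (i, inr k) \in T)) => [k Hk|none]; first by exists k.
  exfalso; have := conn None (Some (i,true)); apply/negP.
  apply: (noncon (A := [set Some (i,true)])).
    move=> -[j [s|k]] eT /=; rewrite !inE /= ?SomeE ?NoneSomeE ?xpair_eqE;
    (case: (eqVneq j i) => [?|jne]; [subst j | by rewrite ?(negbTE jne)]); rewrite ?andTb //.
      by case: s eT => // eT; rewrite eT in Hnb.
    by rewrite none in eT.
  by rewrite !inE !NoneSomeE SomeE eqxx.
have F4b : (i, inl true) \in T -> (i, inl false) \notin T -> exists k, (i, inr k) \in T.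
  move=> Ha Hnb; case: (pickP (fun k => (i, inr k) \in T)) => [k Hk|none]; first by exists k.
  exfalso; have := conn None (Some (i,false)); apply/negP.
  apply: (noncon (A := [set Some (i,false)])).
    move=> -[j [s|k]] eT /=; rewrite !inE /= ?SomeE ?NoneSomeE ?xpair_eqE;
    (case: (eqVneq j i) => [?|jne]; [subst j | by rewrite ?(negbTE jne)]); rewrite ?andTb //.
      by case: s eT => // eT; rewrite eT in Hnb.
    by rewrite none in eT.
  by rewrite !inE !NoneSomeE SomeE eqxx.
rewrite /vlT; case Ha: ((i, inl false) \in T); case Hb': ((i, inl true) \in T) => /=.
- have -> : [set k | (i, inr k) \in T] = set0.
    by apply/setP => k; rewrite !inE (negbTE (F3 Ha Hb' k)).
  by rewrite cards0.
- have [k Hk] := F4a Ha (negbT Hb').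
  have -> : [set k' | (i, inr k') \in T] = [set k].
    by apply/setP => k'; rewrite !inE; apply/idP/eqP => [/(F2 _ _ Hk) -> | ->].
  by rewrite cards1.
- have [k Hk] := F4b Hb' (negbT Ha).
  have -> : [set k' | (i, inr k') \in T] = [set k].
    by apply/setP => k'; rewrite !inE; apply/idP/eqP => [/(F2 _ _ Hk) -> | ->].
  by rewrite cards1.
- by rewrite Ha Hb' in F1.
Qed.

Lemma st_iff T : spanning_tree gends T = [forall i, vlT T i].
Proof.
apply/idP/forallP; [exact: necessary | exact: sufficient].
Qed.
Section Pot.
Variable R : realType.
Local Open Scope ring_scope.

Lemma sum_constR (T : finType) (P : pred T) (c : R) :
  \sum_(e | P e) c = c * \sum_(e | P e) 1.
Proof. by rewrite big_distrr /=; apply: eq_bigr => *; rewrite mulr1. Qed.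

Lemma sum1_ge0 (T : finType) (P : pred T) : 0 <= \sum_(e | P e) (1 : R).
Proof. by apply: sumr_ge0 => *; exact: ler01. Qed.

Variables (i : 'I_M) (phi : Vt -> R).
Hypothesis Hphi : unit_potential gends phi None (Some (i, false)).

Lemma pot_other j : j != i -> phi (Some (j, false)) = 1 /\ phi (Some (j, true)) = 1.
Proof.
move=> ji; case: Hphi => p1 [p0 harm].
set u := phi (Some (j, false)); set w := phi (Some (j, true)).
have nx : Some (j, false) != Some (i, false) by rewrite SomeE xpair_eqE (negbTE ji).
have hx := harm (Some (j, false)) erefl nx.
have ny : Some (j, true) != Some (i, false) by rewrite SomeE xpair_eqE andbF.
have hy := harm (Some (j, true)) erefl ny.
rewrite /net_current in hx hy.
rewrite (eq_bigr (fun _ => u - w)) in hx; last first.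
  move=> -[j' [s|k]] /=; rewrite ?NoneSomeE // SomeE xpair_eqE andbT => /eqP ->.
  by [].
rewrite [X in _ + X](eq_bigr (fun _ => u - 1)) in hx; last first.
  move=> -[j' [s|k]] /=; rewrite SomeE xpair_eqE ?andbF //.
  by move=> _; rewrite p1.
rewrite (eq_bigr (fun _ => 0)) in hy; last first.
  by move=> -[j' [s|k]] /=; rewrite ?NoneSomeE // SomeE xpair_eqE andbF.
rewrite [X in _ + X](bigD1 (j, inl true)) //= p1 in hy.
rewrite [X in _ + (_ + X)](eq_bigr (fun _ => w - u)) in hy; last first.
  move=> -[j' [s|k]] /=; rewrite SomeE xpair_eqE.
    by case/andP => /andP [/eqP -> /eqP ->]; rewrite eqxx.
  by case/andP => /andP [/eqP -> _].
rewrite !(sum_constR _ (w - u)) !(sum_constR _ (u - w)) !(sum_constR _ (u - 1)) in hx hy.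
rewrite big1_eq add0r -/w in hy.
have b0 : 0 < \sum_(e | (gends e).2 == Some (j, false)) (1 : R).
  rewrite (bigD1 (j, inl false)) //=.
  by apply: (@lt_le_trans _ _ 1); [exact: ltr01 | rewrite lerDl sum1_ge0].
have a0 := sum1_ge0 (fun e => (gends e).1 == Some (j, false)).
have c0 := sum1_ge0 (fun e => ((gends e).2 == Some (j, true)) && (e != (j, inl true))).
move: hx hy b0 a0 c0; set a := \sum_(e | _) _; set b := \sum_(e | _) _; set c := \sum_(e | _) _.
move=> hx hy b0 a0 c0; clearbody a b c u w.
have [uw|wu] := lerP u w.
  have h1 : 0 <= (w - u) * c by apply: mulr_ge0; lra.
  have h2 : 0 <= (w - u) * a by apply: mulr_ge0; lra.
  have h3 : 0 <= (u - 1) * b by lra.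
  have h4 : 1 <= u by rewrite -subr_ge0; rewrite pmulr_lge0 // in h3.
  split; lra.
have h1 : 0 <= (u - w) * c by apply: mulr_ge0; lra.
have h2 : 0 <= (u - w) * a by apply: mulr_ge0; lra.
have h3 : (u - 1) * b <= 0 by lra.
have h4 : u <= 1 by rewrite -subr_le0; rewrite pmulr_lle0 // in h3.
split; lra.
Qed.
Lemma pot_yi : 0 < phi (Some (i, true)).
Proof.
case: Hphi => p1 [p0 harm].
set w := phi (Some (i, true)).
have ny : Some (i, true) != Some (i, false) by rewrite SomeE xpair_eqE andbF.
have hy := harm (Some (i, true)) erefl ny.
rewrite /net_current in hy.
rewrite (eq_bigr (fun _ => 0)) in hy; last first.
  by move=> -[j' [s|k]] /=; rewrite ?NoneSomeE // SomeE xpair_eqE andbF.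
rewrite [X in _ + X](bigD1 (i, inl true)) //= p1 in hy.
rewrite [X in _ + (_ + X)](eq_bigr (fun _ => w - 0)) in hy; last first.
  move=> -[j' [s|k]] /=; rewrite SomeE xpair_eqE.
    by case/andP => /andP [/eqP -> /eqP ->]; rewrite eqxx.
  by case/andP => /andP [/eqP -> _]; rewrite p0.
rewrite (sum_constR _ (w - 0)) big1_eq add0r -/w subr0 in hy.
have c0 := sum1_ge0 (fun e => ((gends e).2 == Some (i, true)) && (e != (i, inl true))).
move: hy c0; set c := \sum_(e | _) _ => hy c0; clearbody c w.
rewrite ltNge; apply/negP => w0.
have : w * c <= 0 by rewrite mulr_le0_ge0.
lra.
Qed.

Lemma cond_lt2 : net_current gends phi None < 2.
Proof.
have Hy := pot_yi.
case: Hphi => p1 [p0 harm].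
rewrite /net_current p1.
rewrite [X in _ + X]big1; last by move=> -[j' [s|k]] /=.
rewrite (bigD1 (i, inl false)) //= (bigD1 (i, inl true)) //=.
rewrite big1 ?addr0; last first.
  move=> -[j' [s|k]] //=; rewrite !xpair_eqE => /andP [ne1 ne2].
  have [ji|ji] := eqVneq j' i.
    by subst j'; move: ne1 ne2; rewrite eqxx /=; case: s; rewrite eqxx.
  have [h1 h2] := pot_other ji; case: s {ne1 ne2}; apply/eqP; rewrite subr_eq0;
  apply/eqP; [exact: (esym h2) | exact: (esym h1)].
  have key : forall a b : R, a = 0 -> 0 < b -> 1 - a + (1 - b) < 2.
    by move=> a b -> ?; lra.
  by apply: key; [exact: p0 | exact: Hy].
by rewrite xpair_eqE eqxx.
Qed.
End Pot.
Lemma card_bij (A C : finType) (f : A -> C) (g : C -> A) (P : pred C) :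
  cancel f g -> cancel g f -> #|[set x | P (f x)]| = #|[set y | P y]|.
Proof.
move=> fK gK; rewrite -(card_imset _ (can_inj fK)).
apply: eq_card => y; rewrite inE; apply/imsetP/idP => [[x]|Py].
  by rewrite inE => Px ->.
by exists (g y); rewrite ?inE gK.
Qed.

Definition Lset (i : 'I_M) (T : {set Et}) : {set Xt} := [set s | (i, s) \in T].
Definition vlS (A : {set Xt}) : bool :=
  (((inl false \in A) + (inl true \in A) + #|[set k | inr k \in A]| == 2)%N
  && ((inl false \in A) || (inl true \in A))).

Lemma vlT_L T i : vlT T i = vlS (Lset i T).
Proof.
rewrite /vlT /vlS !inE.
have -> : [set k | inr k \in Lset i T] = [set k | (i, inr k) \in T].
  by apply/setP => k; rewrite !inE.
by [].
Qed.

Definition ab : {set Xt} := [set inl false; inl true].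
Lemma vl_ab : vlS ab.
Proof.
rewrite /vlS /ab !inE !eqxx /= ?orbT.
have -> : [set k | inr k \in [set (inl false : Xt); inl true]] = set0.
  by apply/setP => k; rewrite !inE.
by rewrite cards0.
Qed.

Definition Vs := [set A : {set Xt} | vlS A].

Lemma card_family (I Y : finType) (Q : {set Y}) :
  #|[set g : {ffun I -> Y} | [forall i, g i \in Q]]| = (#|Q| ^ #|I|)%N.
Proof.
rewrite -card_ffun_on; apply: eq_card => g; rewrite inE.
by apply/forallP/ffun_onP.
Qed.

Definition Phi (T : {set Et}) : {ffun 'I_M -> {set Xt}} := [ffun i => Lset i T].
Definition Phi' (g : {ffun 'I_M -> {set Xt}}) : {set Et} := [set e | e.2 \in g e.1].
Lemma PhiK : cancel Phi Phi'.
Proof. by move=> T; apply/setP => -[i s]; rewrite !inE ffunE inE. Qed.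
Lemma Phi'K : cancel Phi' Phi.
Proof. by move=> g; apply/ffunP => i; apply/setP => s; rewrite !ffunE !inE. Qed.

Lemma card_trees : #|[set T | spanning_tree gends T]| = (#|Vs| ^ M)%N.
Proof.
have -> : [set T | spanning_tree gends T] = [set T | [forall i, Phi T i \in Vs]].
  apply/setP => T; rewrite !inE st_iff; apply: eq_forallb => i.
  by rewrite ffunE inE vlT_L.
rewrite (card_bij (fun g : {ffun 'I_M -> {set Xt}} => [forall i, g i \in Vs]) PhiK Phi'K).
by rewrite card_family card_ord.
Qed.

Variable rho : nat.

Definition Psi (Ts : {ffun 'I_rho -> {set Et}}) : {ffun 'I_M -> {ffun 'I_rho -> {set Xt}}} :=
  [ffun i => [ffun r => Lset i (Ts r)]].
Definition Psi' (G : {ffun 'I_M -> {ffun 'I_rho -> {set Xt}}}) : {ffun 'I_rho -> {set Et}} :=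
  [ffun r => [set e | e.2 \in G e.1 r]].
Lemma PsiK : cancel Psi Psi'.
Proof. by move=> Ts; apply/ffunP => r; apply/setP => -[i s]; rewrite !ffunE !inE ?ffunE ?inE. Qed.
Lemma Psi'K : cancel Psi' Psi.
Proof. by move=> G; apply/ffunP => i; apply/ffunP => r; apply/setP => s; rewrite !ffunE !inE ?ffunE. Qed.

Definition Qs := [set h : {ffun 'I_rho -> {set Xt}} | [forall r, h r \in Vs]].
Definition cst : {ffun 'I_rho -> {set Xt}} := [ffun _ => ab].

Lemma card_Qs : #|Qs| = (#|Vs| ^ rho)%N.
Proof. by rewrite card_family card_ord. Qed.

Lemma cst_in : cst \in Qs.
Proof. by rewrite inE; apply/forallP => r; rewrite ffunE inE vl_ab. Qed.

Definition Ev (Ts : {ffun 'I_rho -> {set Et}}) : bool :=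
  [exists i, [forall r, Lset i (Ts r) == ab]].

Lemma card_good :
  #|[set Ts : {ffun 'I_rho -> {set Et}} | [forall r, spanning_tree gends (Ts r)] && Ev Ts]| =
  (#|Qs| ^ M - (#|Qs| - 1) ^ M)%N.
Proof.
have -> : [set Ts : {ffun 'I_rho -> {set Et}} | [forall r, spanning_tree gends (Ts r)] && Ev Ts]
   = [set Ts | [forall i, Psi Ts i \in Qs] && [exists i, Psi Ts i == cst]].
  apply/setP => Ts; rewrite !inE; congr (_ && _).
    apply/forallP/forallP => H.
      move=> i; rewrite ffunE inE; apply/forallP => r.
      by have := H r; rewrite st_iff => /forallP /(_ i); rewrite vlT_L ffunE inE.
    move=> r; rewrite st_iff; apply/forallP => i; rewrite vlT_L.
    by have := H i; rewrite ffunE inE => /forallP /(_ r); rewrite ffunE inE.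
  apply: eq_existsb => i; rewrite ffunE; apply/forallP/eqP => [H|H].
    by apply/ffunP => r; rewrite !ffunE; apply/eqP.
  by move=> r; apply/eqP; have := congr1 (fun f : {ffun 'I_rho -> {set Xt}} => f r) H; rewrite !ffunE.
rewrite (card_bij (fun G : {ffun 'I_M -> {ffun 'I_rho -> {set Xt}}} => [forall i, G i \in Qs] && [exists i, G i == cst]) PsiK Psi'K).
set AQ := [set G : {ffun 'I_M -> {ffun 'I_rho -> {set Xt}}} | [forall i, G i \in Qs]].
set BQ := [set G : {ffun 'I_M -> {ffun 'I_rho -> {set Xt}}} | [forall i, G i \in Qs :\ cst]].
have -> : [set G : {ffun 'I_M -> {ffun 'I_rho -> {set Xt}}} | [forall i, G i \in Qs] && [exists i, G i == cst]] = AQ :\: BQ.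
  apply/setP => G; rewrite !inE negb_forall.
  apply/idP/idP => /andP [hA hE]; apply/andP; split => //.
    case/existsP: hE => i Hi; apply/existsP; exists i.
    by rewrite !inE (eqP Hi) eqxx.
  case/existsP: hA => i; rewrite !inE negb_and negbK => Hi; apply/existsP; exists i.
  by case/orP: Hi => // Hn; move/forallP: hE => /(_ i); rewrite inE (negbTE Hn).
rewrite cardsD (setIidPr _); last first.
  apply/subsetP => G; rewrite !inE => /forallP H; apply/forallP => i.
  by have := H i; rewrite inE => /andP [].
have h1 : #|Qs :\ cst| = (#|Qs| - 1)%N by rewrite (cardsD1 cst Qs) cst_in add1n subn1.
by rewrite /AQ /BQ (card_family _ (Qs :\ cst)) (card_family _ Qs) card_ord h1.
Qed.
Local Open Scope ring_scope.
Lemma bad_of_Ev (R : realType) (cf : R) (phi : Et -> Vt -> R) Ts :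
  (0 < rho)%N -> 1 <= cf -> 2 * cf < B%:R ->
  (forall e, unit_potential gends (phi e) (gends e).1 (gends e).2) ->
  Ev Ts -> bad_sample gends (fun e => net_current gends (phi e) (gends e).1) cf Ts.
Proof.
move=> rho0 cf1 hB Hp /existsP [i /forallP HE].
have Hr r : Lset i (Ts r) = ab by apply/eqP; exact: HE r.
have aT r : (i, inl false) \in Ts r.
  by have /setP /(_ (inl false)) := Hr r; rewrite !inE eqxx.
have dT r k : (i, inr k) \notin Ts r.
  by have /setP /(_ (inr k)) := Hr r; rewrite !inE => ->.
apply/existsP; exists [set Some (i, false)].
have cut_a : (i, inl false) \in cut gends [set Some (i, false)].
  by rewrite !inE /= NoneSomeE eqxx.
cbv zeta; rewrite (bigD1 (i, inl false)) //= big1 ?addr0; last first.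
  move=> -[j [s|k]]; rewrite !inE /= ?NoneSomeE ?SomeE ?xpair_eqE => /andP [Hc ne].
    by move: Hc ne; case: (j == i); case: s => //=; rewrite eqxx.
  have ji : j = i by apply/eqP; move: Hc; case: (j == i).
  subst j; clear Hc.
  rewrite /sampled_weight.
  have -> : [set r | (i, inr k) \in Ts r] = set0.
    by apply/setP => r; rewrite !inE (negbTE (dT r k)).
  by rewrite cards0 mulr0.
rewrite /sampled_weight.
have -> : [set r | (i, inl false) \in Ts r] = setT.
  by apply/setP => r; rewrite !inE aT.
rewrite cardsT card_ord divfK; last by rewrite pnatr_eq0 -lt0n.
set c := net_current _ _ _.
have c2 : c < 2 by apply: cond_lt2; exact: (Hp (i, inl false)).
have sub : [set (i, inr k) | k : 'I_B] \subset cut gends [set Some (i, false)].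
  apply/subsetP => e /imsetP [k _ ->].
  by rewrite !inE /= eqxx SomeE xpair_eqE andbF.
have kB : (B <= #|cut gends [set Some (i, false)]|)%N.
  have := subset_leq_card sub; rewrite card_imset ?card_ord //.
  by move=> k1 k2 [].
have kBR : (B%:R <= #|cut gends [set Some (i, false)]|%:R :> R) by rewrite ler_nat.
apply/orP; right.
have : c * cf < 2 * cf by rewrite ltr_pM2r //; lra.
lra.
Qed.
End Flower.

Lemma bern a n : (a ^ n * (a + n) <= a * (a + 1) ^ n)%N.
Proof.
elim: n => [|n IH]; first by rewrite !expn0 muln1 mul1n addn0.
rewrite !expnS; move: IH; set X := a ^ n; set Y := (a + 1) ^ n => IH.
have h : (a * (a + n.+1) <= (a + 1) * (a + n))%N by nia.
have h1 := leq_mul (leqnn (a+1)) IH.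
have h2 := leq_mul (leqnn X) h.
nia.
Qed.
Lemma half_ineq K M : (0 < K)%N -> (K <= M)%N -> (2 * (K - 1) ^ M <= K ^ M)%N.
Proof.
move=> K0 KM; set a := (K - 1)%N.
have Ka : K = (a + 1)%N by rewrite /a subnK.
rewrite Ka -(subnK KM) Ka (expnD a) (expnD (a + 1)).
have em : forall e, (a ^ e <= (a + 1) ^ e)%N.
  by elim=> [|e IH] //; rewrite !expnS leq_mul // addn1.
have := em (M - (a + 1))%N; set P := a ^ _; set Q := (a + 1) ^ (M - _) => hPQ.
have := bern a (a + 1); set X := a ^ (a + 1); set Y := (a + 1) ^ (a + 1) => h.
have h3 : (2 * X <= Y)%N.
  case: (posnP a) => [a0|a0].
    by rewrite /X a0 exp0n.
  rewrite -(leq_pmul2l a0); apply: leq_trans h; nia.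
have := leq_mul hPQ h3; rewrite -/X -/Y; nia.
Qed.

Local Open Scope ring_scope.

Lemma sub_conn (V E : finType) (ends : E -> V * V) (T : {set E}) :
  connected_on ends T -> connected_on ends [set: E].
Proof.
move=> /forallP H; apply/forallP => x; apply/forallP => y.
have /forallP /(_ y) := H x; apply: connect_sub => u v /existsP [e /andP [_ He]].
by apply: connect1; apply/existsP; exists e; rewrite in_setT.
Qed.

Theorem lemma1p10 (R : realType) (cf : R) :
  1 <= cf ->
  exists alpha delta : R, 0 < alpha /\ 0 < delta /\
  forall N : nat,
    exists (V E : finType) (ends : E -> V * V),
      (N <= #|V|)%N /\ loopless ends /\ connected_on ends [set: E] /\
      forall phi : E -> V -> R,
        (forall e, unit_potential ends (phi e) (ends e).1 (ends e).2) ->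
        forall rho : nat, (0 < rho)%N ->
          rho%:R <= alpha * ln (#|V|%:R : R) ->
          delta <= failure_prob ends
                     (fun e => net_current ends (phi e) (ends e).1) cf rho.
Proof.
move=> cf1.
pose B := (Num.truncn (2 * cf)).+1.
have hB : 2 * cf < B%:R by exact: truncnS_gt.
pose bN := #|{set Xt B}|.
have bN2 : (2 <= bN)%N.
  have ne : (set0 : {set Xt B}) != setT.
    by apply/eqP => /setP /(_ (inl false)); rewrite !inE.
  have := max_card (mem [set (set0 : {set Xt B}); setT]).
  by rewrite cards2 ne.
have lb0 : 0 < ln (bN%:R : R) by apply: ln_gt0; rewrite ltr1n.
exists (2 * ln (bN%:R : R))^-1, (1 / 2); split.
  by rewrite invr_gt0 mulr_gt0.
split; first by lra.
move=> N; pose M := N.+1.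
exists (Vt M), (Et M B), (@gends M B).
have cV : #|Vt M| = (M * 2).+1 by rewrite card_option card_prod card_ord card_bool.
split; first by rewrite cV; lia.
split; first by move=> -[j [s|k]] //=; rewrite SomeE xpair_eqE andbF.
split.
  apply: (@sub_conn _ _ _ (Phi' [ffun _ => ab B])).
  have : spanning_tree (@gends M B) (Phi' [ffun _ => ab B]).
    apply: sufficient => i; rewrite vlT_L.
    suff -> : Lset i (Phi' [ffun _ => ab B]) = ab B by exact: vl_ab.
    by apply/setP => s; rewrite [in LHS]inE /= inE ffunE.
  by case/andP.
move=> phi Hp rho rho0 Hrho.
have KM : (#|Qs B rho| <= M)%N.
  rewrite card_Qs.
  have le1 : (#|Vs B| ^ rho <= bN ^ rho)%N by rewrite leq_exp2r // max_card.
  have L : (bN ^ (2 * rho) <= (M * 2).+1)%N.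
    rewrite -(ler_nat R) -cV.
    have pos1 : ((bN ^ (2 * rho))%:R : R) \in Num.pos.
      by rewrite posrE ltr0n expn_gt0; lia.
    have pos2 : ((#|Vt M|)%:R : R) \in Num.pos by rewrite posrE ltr0n cV.
    rewrite -(ler_ln pos1 pos2) natrX lnXn ?ltr0n; last by lia.
    rewrite mulrC -/(_ / _) ler_pdivlMr ?mulr_gt0 // in Hrho.
    rewrite -[_ *+ _]mulr_natr natrM.
    have -> : ln (bN%:R : R) * (2%:R * rho%:R) = rho%:R * (2 * ln bN%:R) by ring.
    done.
  have t2 : (2 <= bN ^ rho)%N.
    by apply: (leq_trans bN2); rewrite -{1}(expn1 bN) leq_pexp2l //; lia.
  move: L; rewrite mulnC expnM; set t := (bN ^ rho)%N => L.
  have : (t <= M)%N by nia.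
  by apply: leq_trans.
have K0 : (0 < #|Qs B rho|)%N by apply/card_gt0P; exists (cst B rho); exact: cst_in.
have hineq := half_ineq K0 KM.
rewrite /failure_prob card_trees -expnM mulnC expnM -card_Qs.
set K := #|Qs B rho|.
set num := #|[set Ts : {ffun 'I_rho -> {set Et M B}} | _]|.
have num_ge : (K ^ M - (K - 1) ^ M <= num)%N.
  rewrite -card_good; apply: subset_leq_card; apply/subsetP => Ts.
  rewrite !inE => /andP [-> HE] /=.
  exact: (bad_of_Ev rho0 cf1 hB Hp HE).
have den0 : (0 < K ^ M)%N by rewrite expn_gt0 K0.
have key : (K ^ M <= 2 * num)%N.
  have : ((K - 1) ^ M <= K ^ M)%N by rewrite leq_exp2r // leq_subr.
  move: hineq num_ge; rewrite -/K; set x := (K ^ M)%N; set y := ((K - 1) ^ M)%N; lia.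
rewrite -(ler_nat R) natrM in key.
rewrite ler_pdivlMr ?ltr0n //.
lra.
Qed.
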